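(* For every triple of integers $0\le i<j<k$, the following seven elements of $\mathcal S$ belong to $\mathcal I$ (writing $\pi_{(a|b)}$ for hooks and $\pi_{(a_1,a_2|b_1,b_2)}$, $\pi_{(a_1,a_2,a_3|b_1,b_2,b_3)}$ for partitions of Frobenius rank 2, 3, and $\pi_{(\emptyset|\emptyset)}=\pi_\emptyset$): $\kappa_1=\pi_{\emptyset}(\pi_{(i|i)}\pi_{(k,j|k,j)}+\pi_{(j|k)}\pi_{(k,i|j,i)})-\pi_{(i|i)}\pi_{(j|j)}\pi_{(k|k)}+\pi_{(i|j)}\pi_{(j|k)}\pi_{(k|i)}$; $\kappa_2=\pi_{\emptyset}(\pi_{(j|j)}\pi_{(k,i|k,i)}-\pi_{(k|i)}\pi_{(j,i|k,j)})-\pi_{(i|i)}\pi_{(j|j)}\pi_{(k|k)}+\pi_{(i|j)}\pi_{(j|k)}\pi_{(k|i)}$; $\kappa_3=\pi_{\emptyset}(\pi_{(k|k)}\pi_{(j,i|j,i)}+\pi_{(i|j)}\pi_{(k,j|k,i)})-\pi_{(i|i)}\pi_{(j|j)}\pi_{(k|k)}+\pi_{(i|j)}\pi_{(j|k)}\pi_{(k|i)}$; $\kappa_1^T=\pi_{\emptyset}(\pi_{(i|i)}\pi_{(k,j|k,j)}+\pi_{(k|j)}\pi_{(j,i|k,i)})-\pi_{(i|i)}\pi_{(j|j)}\pi_{(k|k)}+\pi_{(j|i)}\pi_{(k|j)}\pi_{(i|k)}$; $\kappa_2^T=\pi_{\emptyset}(\pi_{(j|j)}\pi_{(k,i|k,i)}-\pi_{(i|k)}\pi_{(k,j|j,i)})-\pi_{(i|i)}\pi_{(j|j)}\pi_{(k|k)}+\pi_{(j|i)}\pi_{(k|j)}\pi_{(i|k)}$;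 $\kappa_3^T=\pi_{\emptyset}(\pi_{(k|k)}\pi_{(j,i|j,i)}+\pi_{(j|i)}\pi_{(k,i|k,j)})-\pi_{(i|i)}\pi_{(j|j)}\pi_{(k|k)}+\pi_{(j|i)}\pi_{(k|j)}\pi_{(i|k)}$; and, with $X:=\pi_{(i|j)}\pi_{(j|k)}\pi_{(k|i)}$, $\kappa_0=\pi_{\emptyset}^2\pi_{(k,j,i|k,j,i)}X-X^2+X\big(2\pi_{(i|i)}\pi_{(j|j)}\pi_{(k|k)}-\pi_{\emptyset}(\pi_{(i|i)}\pi_{(k,j|k,j)}+\pi_{(j|j)}\pi_{(k,i|k,i)}+\pi_{(k|k)}\pi_{(j,i|j,i)})\big)-(\pi_{(i|i)}\pi_{(j|j)}-\pi_{\emptyset}\pi_{(j,i|j,i)})(\pi_{(i|i)}\pi_{(k|k)}-\pi_{\emptyset}\pi_{(k,i|k,i)})(\pi_{(j|j)}\pi_{(k|k)}-\pi_{\emptyset}\pi_{(k,j|k,j)})$.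
   Context: Partitions and Frobenius notation: a partition $\lambda$ of Frobenius rank $r$ is written $\lambda=(a_1,\dots,a_r\mid b_1,\dots,b_r)$ with $a_1>\dots>a_r\ge 0$, $b_1>\dots>b_r\ge 0$, $a_i=\lambda_i-i$, $b_i=\lambda'_i-i$ ($\lambda'$ the conjugate partition); $\emptyset$ denotes the empty partition (rank $0$). Let $\mathcal S=\mathbb C[\pi_\lambda]$ be the polynomial ring in countably many indeterminates $\pi_\lambda$ indexed by all partitions $\lambda$. Plücker relations: for integers $0<k<N$ and a $k$-tuple $L=(L_1,\dots,L_k)$ of integers in $\{-k,\dots,N-k-1\}$ set $\tilde\pi_L:=\mathrm{sgn}(L)\,\pi_{\lambda(L)}$, where $\mathrm{sgn}(L)$ is the sign of the permutation sorting $L$ into increasing order ($\mathrm{sgn}(L):=0$ if $L$ has a repeated entry) and, if $L'_1<\dots<L'_k$ is the increasing rearrangement of $L$, $\lambda(L)$ is the partition with parts $\lambda_i=L'_{k-i+1}+i$, $i=1,\dots,k$. For a $(k-1)$-tuple $I$ and a $(k+1)$-tuple $J$ with entries in $\{-k,\dots,N-k-1\}$ the Plücker quadratic form is $p_{I,J}:=\sum_{j=1}^{k+1}(-1)^j\tilde\pi_{I_1,\dots,I_{k-1},J_j}\,\tilde\pi_{J_1,\dots,\widehat{J_j},\dots,J_{k+1}}\in\mathcal S$ (hat = omission). $\mathcal I\subset\mathcal S$ is the ideal generated by all $p_{I,J}$ for all $0<k<N$ and all such $I,J$. *)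

(* Defs.v *)
From HB Require Import structures.
From mathcomp Require Import all_boot all_order all_algebra.
From mathcomp Require Import Rstruct.
From mathcomp Require Import complex.
From mathcomp.multinomials Require Import monalg.

Set Implicit Arguments.
Unset Strict Implicit.
Unset Printing Implicit Defensive.

Import Order.TTheory GRing.Theory Num.Theory.
Local Open Scope ring_scope.

Definition is_part (s : seq nat) : bool :=
  sorted geq s && all (fun x => (0 < x)%N) s.

Record partition := Part { pval :> seq nat; _ : is_part pval }.
HB.instance Definition _ := [isSub for pval].
HB.instance Definition _ := [Equality of partition by <:].
HB.instance Definition _ := [Choice of partition by <:].

Definition empty_part : partition := @Part [::] isT.

(* coerce a sequence to a partition (only used on genuine partitions) *)
Definition mkpart (s : seq nat) : partition := insubd empty_part s.

(* Frobenius notation (a_1,...,a_r | b_1,...,b_r):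
   lambda_i = a_i + i for 1 <= i <= r, and for i > r,
   lambda_i = #{ j <= r : b_j + j >= i };  the length of lambda is b_1 + 1
   (and 0 when r = 0). *)
Definition frob_seq (a b : seq nat) : seq nat :=
  let r := size a in
  let l := if r == 0%N then 0%N else (nth 0%N b 0).+1 in
  [seq (if (i <= r)%N then (nth 0%N a i.-1 + i)%N
        else count (fun j => (i <= nth 0%N b j + j.+1)%N) (iota 0 r))
  | i <- iota 1 l].

Definition frob (a b : seq nat) : partition := mkpart (frob_seq a b).

Definition C : fieldType := Rdefinitions.R[i].
Definition S := {malg C[{cmonom partition}]}.

Definition pi (l : partition) : S := << ucm l >>.

Definition piF (a b : seq nat) : S := pi (frob a b).

Definition ninv (L : seq int) : nat :=
  \sum_(0 <= p < size L) \sum_(p.+1 <= q < size L)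
     (nth 0 L q < nth 0 L p)%R.

(* sign of the sorting permutation, 0 if an entry is repeated *)
Definition sgnL (L : seq int) : C :=
  if uniq L then (-1) ^+ ninv L else 0.

Definition lamL (L : seq int) : partition :=
  let dec := rev (sort (fun x y : int => x <= y) L) in
  mkpart (filter (fun x => (0 < x)%N)
    [seq absz (x.1 + (x.2.+1)%:Z) | x <- zip dec (iota 0 (size L))]).

Definition tpi (L : seq int) : S := sgnL L *: pi (lamL L).

Definition plucker (I J : seq int) : S :=
  \sum_(j < size J)
    (-1) ^+ j.+1 * tpi (rcons I (nth 0 J j)) * tpi (take j J ++ drop j.+1 J).

Definition in_range (k N : nat) (L : seq int) : bool :=
  all (fun x => (- (k%:Z) <= x) && (x <= N%:Z - k%:Z - 1)) L.

Definition plucker_gen (p : S) : Prop :=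
  exists (k N : nat) (I J : seq int),
    [/\ (0 < k < N)%N, size I = k.-1, size J = k.+1,
        in_range k N I && in_range k N J & p = plucker I J].

Definition in_ideal (gen : S -> Prop) (f : S) : Prop :=
  exists s : seq (S * S),
    (forall x, x \in s -> gen x.2) /\ f = \sum_(x <- s) x.1 * x.2.

Definition PluckerIdeal (f : S) : Prop := in_ideal plucker_gen f.

(* Main.v *)
Require Import Defs.
From HB Require Import structures.
From mathcomp Require Import all_boot all_order all_algebra.
From mathcomp.multinomials Require Import monalg.
From mathcomp Require Import ring lra zify.
Import Order.TTheory GRing.Theory Num.Theory.
Local Open Scope ring_scope.

Lemma ideal_gen (gen : S -> Prop) g : gen g -> in_ideal gen g.
Proof.
move=> Hg; exists [:: (1, g)]; split; first by move=> x; rewrite inE => /eqP ->.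
by rewrite big_cons big_nil mul1r addr0.
Qed.

Lemma ideal_add (gen : S -> Prop) f g :
  in_ideal gen f -> in_ideal gen g -> in_ideal gen (f + g).
Proof.
move=> [s [Hs ->]] [t [Ht ->]]; exists (s ++ t); split; last by rewrite big_cat.
by move=> x; rewrite mem_cat => /orP[/Hs|/Ht].
Qed.

Lemma ideal_mul (gen : S -> Prop) c f :
  in_ideal gen f -> in_ideal gen (c * f).
Proof.
move=> [s [Hs ->]]; exists [seq (c * x.1, x.2) | x <- s]; split.
  by move=> x /mapP [y Hy ->] /=; apply: Hs.
by rewrite big_map mulr_sumr; apply: eq_bigr => x _; rewrite mulrA.
Qed.

Lemma ideal_eq (gen : S -> Prop) f g : f = g -> in_ideal gen f -> in_ideal gen g.
Proof. by move=> ->. Qed.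

Lemma sum_nth_count (P : pred int) (s : seq int) :
  (\sum_(0 <= q < size s) P (nth 0%R s q))%N = count P s.
Proof.
elim: s => [|y s IH] /=; first by rewrite big_geq.
by rewrite big_nat_recl //= IH.
Qed.

Lemma ninv_cons (x : int) s :
  ninv (x :: s) = (count (fun y => (y < x)%R) s + ninv s)%N.
Proof.
rewrite /ninv /= big_nat_recl // big_add1 /=.
congr (_ + _)%N.
  by rewrite -(sum_nth_count (fun y => (y < x)%R)).
by apply: eq_bigr => p _; rewrite big_add1.
Qed.

Lemma ninv_cat (R s : seq int) :
  ninv (R ++ s) = (ninv R + ninv s + \sum_(y <- s) count (fun x => (y < x)%R) R)%N.
Proof.
elim: R => [|x R IH].
  rewrite /= big1 ?addn0; last by move=> y _.
  by rewrite [ninv [::]]/ninv big_geq.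
rewrite cat_cons !ninv_cons IH count_cat.
under [in RHS]eq_bigr => y _ do rewrite /= addnC.
rewrite big_split /=.
have -> : (\sum_(i <- s) (i < x)%R)%N = count (fun y => (y < x)%R) s.
  by elim: s {IH} => [|y s IHs]; rewrite ?big_nil ?big_cons ?IHs.
ring.
Qed.

Lemma signZ (n : nat) (x : S) : ((-1) ^+ n : C) *: x = (-1) ^+ n * x.
Proof.
elim: n => [|n IH]; first by rewrite !expr0 scale1r mul1r.
by rewrite exprS -scalerA IH scaleN1r exprS mulN1r mulNr.
Qed.

Lemma tpiE L : uniq L -> tpi L = (-1) ^+ ninv L * Defs.pi (lamL L).
Proof. by move=> u; rewrite /tpi /sgnL u signZ. Qed.

Lemma tpi0 L : ~~ uniq L -> tpi L = 0.
Proof. by move=> u; rewrite /tpi /sgnL (negbTE u) scale0r. Qed.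

Lemma plucker_cat (R I' J' : seq int) :
  plucker (R ++ I') (R ++ J') =
  \sum_(t < size J') (-1) ^+ (size R + t).+1 * tpi (R ++ rcons I' (nth 0 J' t))
                        * tpi (R ++ (take t J' ++ drop t.+1 J')).
Proof.
rewrite /plucker size_cat big_split_ord /= big1 ?add0r.
  apply: eq_bigr => t _.
  rewrite nth_cat ltnNge leq_addr /= addKn rcons_cat.
  rewrite take_cat drop_cat ltnNge leq_addr /= addKn.
  rewrite ltnNge (leq_trans (leq_addr t _) (leqnSn _)) /= -addnS addKn.
  by rewrite catA.
move=> t _; rewrite /= nth_cat ltn_ord rcons_cat tpi0 ?mulr0 ?mul0r //.
apply/negP; rewrite cat_uniq => /and3P [_ /hasPn H _].
by move: (H (nth 0 R t)); rewrite mem_rcons mem_head (mem_nth _ (ltn_ord t)) => /(_ isT).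
Qed.

Fixpoint dseg (lo n : nat) : seq int :=
  if n is n'.+1 then (- (lo%:Z)) :: dseg lo.+1 n' else [::].

Lemma size_dseg lo n : size (dseg lo n) = n.
Proof. by elim: n lo => [|n IH] lo //=; rewrite IH. Qed.

Lemma mem_dseg lo n x :
  (x \in dseg lo n) = ((- ((lo + n)%:Z) < x) && (x <= - (lo%:Z))).
Proof.
elim: n lo => [|n IH] lo /=.
  by rewrite in_nil addn0; apply/esym/negbTE/negP => /andP[]; lia.
rewrite in_cons IH; apply/idP/idP.
  by move=> /orP[/eqP->|/andP[]]; [apply/andP; split; lia|move=> *; apply/andP; split; lia].
move=> /andP[h1 h2]; have [->|ne] := eqVneq x (- lo%:Z); first by [].

by apply/orP; right; apply/andP; split; lia.
Qed.

Lemma uniq_dseg lo n : uniq (dseg lo n).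
Proof.
elim: n lo => [|n IH] lo //=; rewrite IH andbT mem_dseg.
by apply/negP => /andP[]; lia.
Qed.

Lemma dseg_cat lo n1 n2 : dseg lo (n1 + n2) = dseg lo n1 ++ dseg (lo + n1) n2.
Proof.
elim: n1 lo => [|n1 IH] lo /=; first by rewrite addn0.
by rewrite IH addSnnS.
Qed.

Lemma dseg_split lo n x n1 n2 : x = (lo + n1)%N -> n = (n1 + n2).+1 ->
  dseg lo n = dseg lo n1 ++ (- (x%:Z)) :: dseg x.+1 n2.
Proof. by move=> -> ->; rewrite -addnS dseg_cat. Qed.

Definition gel (x y : int) := y <= x.

Lemma gel_trans : transitive gel.
Proof. by move=> x y z; rewrite /gel => h1 h2; exact: le_trans h2 h1. Qed.

Lemma pairwise_dseg lo n : pairwise gel (dseg lo n).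
Proof.
elim: n lo => [|n IH] lo //=; rewrite IH andbT.
by apply/allP => x; rewrite mem_dseg /gel => /andP[]; lia.
Qed.

Definition F p (D : seq int) : seq nat :=
  [seq absz (x.1 + (x.2.+1)%:Z) | x <- zip D (iota p (size D))].

Lemma F_cons p x D : F p (x :: D) = absz (x + (p.+1)%:Z) :: F p.+1 D.
Proof. by []. Qed.

Lemma F_cat p D1 D2 : F p (D1 ++ D2) = F p D1 ++ F (p + size D1) D2.
Proof. by rewrite /F size_cat iotaD zip_cat ?size_iota // map_cat. Qed.

Lemma F_dseg p lo n : (lo <= p.+1)%N -> F p (dseg lo n) = nseq n (p.+1 - lo)%N.
Proof.
elim: n lo p => [|n IH] lo p hlo //=.
rewrite F_cons IH; last by lia.
rewrite (_ : (p.+2 - lo.+1 = p.+1 - lo)%N); last by lia.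
congr (_ :: _).
by rewrite addrC subzn.
Qed.

Lemma F_a p (a : nat) : absz (a%:Z + (p.+1)%:Z) = (a + p.+1)%N.
Proof. by rewrite -PoszD. Qed.

Lemma lamL_D L D : perm_eq L D -> sorted gel D ->
  lamL L = mkpart (filter (fun x => (0 < x)%N) (F 0 D)).
Proof.
move=> hp hs; rewrite /lamL /F (perm_size hp).
have -> : sort (fun x y : int => x <= y) L = rev D.
  rewrite (perm_sortP le_total le_trans le_anti L (rev D) _).
    apply: sorted_sort; first exact: le_trans.
    by rewrite rev_sorted.
  by rewrite perm_sym perm_rev perm_sym.
by rewrite revK.
Qed.

Lemma map_cst (f : nat -> nat) c s :
  {in s, forall x, f x = c} -> map f s = nseq (size s) c.
Proof.
elim: s => [|y s IH] //= h; rewrite h ?mem_head // IH // => x hx.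
by apply: h; rewrite in_cons hx orbT.
Qed.

Ltac crunch := repeat (case: leqP => ?); try lia.

Lemma frob_hook a b : frob [:: a] [:: b] = mkpart ((a + 1)%N :: nseq b 1%N).
Proof.
rewrite /frob /frob_seq /=; congr (mkpart (_ :: _)).
rewrite (@map_cst _ 1%N) ?size_iota // => x; rewrite mem_iota => hx /=.
crunch.
Qed.

Lemma frob_r2 a1 a2 b1 b2 : (b2 < b1)%N ->
  frob [:: a1; a2] [:: b1; b2] =
  mkpart ([:: (a1 + 1)%N; (a2 + 2)%N] ++ nseq b2 2%N ++ nseq (b1 - b2.+1) 1%N).
Proof.
move=> hb; rewrite /frob /frob_seq /=.
rewrite (_ : iota 2 b1 = iota 2 (1 + b2 + (b1 - b2.+1))); last by congr iota; lia.
rewrite !iotaD !map_cat /=; congr (mkpart (_ :: _ :: _ ++ _)).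
  rewrite (@map_cst _ 2%N) ?size_iota // => x; rewrite mem_iota => hx /=; crunch.
rewrite (@map_cst _ 1%N) ?size_iota // => x; rewrite mem_iota => hx /=; crunch.
Qed.

Lemma frob_r3 a1 a2 a3 b1 b2 b3 : (b3 < b2)%N -> (b2 < b1)%N ->
  frob [:: a1; a2; a3] [:: b1; b2; b3] =
  mkpart ([:: (a1 + 1)%N; (a2 + 2)%N; (a3 + 3)%N] ++ nseq b3 3%N
          ++ nseq (b2 - b3.+1) 2%N ++ nseq (b1 - b2.+1) 1%N).
Proof.
move=> hb3 hb2; rewrite /frob /frob_seq /=.
rewrite (_ : iota 2 b1 = iota 2 (1 + 1 + b3 + (b2 - b3.+1) + (b1 - b2.+1))); last by congr iota; lia.
rewrite !iotaD !map_cat /= -!catA; congr (mkpart (_ :: _ :: _ :: _ ++ _ ++ _)).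
- rewrite (@map_cst _ 3%N) ?size_iota // => x; rewrite mem_iota => hx /=; crunch.
- rewrite (@map_cst _ 2%N) ?size_iota // => x; rewrite mem_iota => hx /=; crunch.
rewrite (@map_cst _ 1%N) ?size_iota // => x; rewrite mem_iota => hx /=; crunch.
Qed.

Ltac leaf := first [ by [] | rewrite /gel; lia
  | apply/allP => ?; rewrite ?mem_cat ?mem_dseg ?inE /gel; lia
  | apply/allrelP => ? ?; rewrite ?mem_cat ?mem_dseg ?inE /gel; lia ].

Ltac sortd := rewrite (sorted_pairwise gel_trans) /= ?pairwise_cat ?pairwise_dseg;
  repeat (apply/andP; split); try leaf.

Lemma filter_nseq0 n : filter (fun x => (0 < x)%N) (nseq n 0%N) = [::].
Proof. by rewrite filter_nseq. Qed.

Lemma filter_nseqP n c : (0 < c)%N -> filter (fun x => (0 < x)%N) (nseq n c) = nseq n c.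
Proof. by move=> h; rewrite filter_nseq h mul1n. Qed.

Lemma lamL_vac m L : perm_eq L (dseg 1 m) -> lamL L = frob [::] [::].
Proof.
move=> hp; rewrite (lamL_D _ _ hp); last by sortd.
by rewrite F_dseg // subnn filter_nseq0.
Qed.

Lemma lamL_hook a b m L : (b < m)%N ->
  perm_eq L (a%:Z :: dseg 1 b ++ dseg b.+2 (m - b.+1)) -> lamL L = frob [:: a] [:: b].
Proof.
move=> hm hp; rewrite (lamL_D _ _ hp); last by sortd.
rewrite frob_hook F_cons F_a F_cat !F_dseg ?size_dseg //.
rewrite /= filter_cat filter_nseqP // (_ : ((1 + b).+1 - b.+2 = 0)%N) ?filter_nseq0 ?cats0 ?addn1 //; lia.
Qed.

Lemma F_dsegE c p lo n : (lo + c = p.+1)%N -> F p (dseg lo n) = nseq n c.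
Proof. move=> h; rewrite F_dseg; last by lia. by rewrite (_ : (p.+1 - lo = c)%N) //; lia. Qed.

Lemma lamL_r2 a1 a2 b1 b2 m L : (b2 < b1)%N -> (b1 < m)%N -> (a2 < a1)%N ->
  perm_eq L (a1%:Z :: a2%:Z :: dseg 1 b2 ++ dseg b2.+2 (b1 - b2.+1) ++ dseg b1.+2 (m - b1.+1)) ->
  lamL L = frob [:: a1; a2] [:: b1; b2].
Proof.
move=> hb hm ha hp; rewrite (lamL_D _ _ hp); last by sortd.
rewrite frob_r2 // !F_cons !F_a !F_cat ?size_dseg.
rewrite (F_dsegE 2); last by lia.
rewrite (F_dsegE 1); last by lia.
rewrite (F_dsegE 0); last by lia.
by rewrite ?addn1 ?addn2 /= !filter_cat filter_nseqP // filter_nseqP // filter_nseq0 cats0.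
Qed.

Lemma lamL_r3 a1 a2 a3 b1 b2 b3 m L : (b3 < b2)%N -> (b2 < b1)%N -> (b1 < m)%N ->
  (a3 < a2)%N -> (a2 < a1)%N ->
  perm_eq L (a1%:Z :: a2%:Z :: a3%:Z :: dseg 1 b3 ++ dseg b3.+2 (b2 - b3.+1)
             ++ dseg b2.+2 (b1 - b2.+1) ++ dseg b1.+2 (m - b1.+1)) ->
  lamL L = frob [:: a1; a2; a3] [:: b1; b2; b3].
Proof.
move=> hb3 hb2 hm ha3 ha2 hp; rewrite (lamL_D _ _ hp); last by sortd.
rewrite frob_r3 // !F_cons !F_a !F_cat ?size_dseg.
rewrite (F_dsegE 3); last by lia.
rewrite (F_dsegE 2); last by lia.
rewrite (F_dsegE 1); last by lia.
rewrite (F_dsegE 0); last by lia.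
by rewrite ?addn1 ?addn2 ?addn3 /= !filter_cat filter_nseqP // filter_nseqP // filter_nseqP // filter_nseq0 cats0.
Qed.

Lemma ninv_nil : ninv [::] = 0%N.
Proof. by rewrite /ninv big_geq. Qed.

Definition R2 b1 b2 m := dseg 1 b2 ++ dseg b2.+2 (b1 - b2.+1) ++ dseg b1.+2 (m - b1.+1).

Ltac uniqt uR := rewrite cat_uniq uR /= ?mem_cat ?mem_dseg ?inE; lia.

Ltac evalcmp := repeat match goal with
 | |- context [ (?x < ?y)%R ] =>
   first [ rewrite (_ : (x < y)%R = true); last by lia
         | rewrite (_ : (x < y)%R = false); last by lia ]
end.

Ltac splitsg := repeat match goal with
 | |- context [ ((-1 : S) ^+ (?a + ?b)) ] => rewrite (exprD (-1 : S) a b)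
 | |- context [ ((-1 : S) ^+ (?a.+1)) ] => rewrite (exprS (-1 : S) a)
end.

Lemma ideal_sign (gen : S -> Prop) p G n :
  p = (-1) ^+ n * - G -> in_ideal gen p -> in_ideal gen G.
Proof.
move=> e hp; have -> : G = (- (-1) ^+ n) * p.
  rewrite e mulrA mulNr -exprD -signr_odd oddD addbb expr0 mulNr mul1r opprK.
  by [].
exact: ideal_mul.
Qed.

Lemma G2m a1 a2 b1 b2 m : (a2 < a1)%N -> (b2 < b1)%N -> (b1 < m)%N ->
  PluckerIdeal (piF [::] [::] * piF [:: a1; a2] [:: b1; b2]
                - piF [:: a1] [:: b1] * piF [:: a2] [:: b2]
                + piF [:: a1] [:: b2] * piF [:: a2] [:: b1]).
Proof.
move=> ha hb hm.
have uR : uniq (R2 b1 b2 m).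
  rewrite /R2 !cat_uniq !uniq_dseg /=; apply/and3P; split => //.
    by apply/hasPn => x; rewrite !mem_cat !mem_dseg; lia.
  by apply/hasPn => x; rewrite !mem_dseg; lia.
have e1 : lamL (R2 b1 b2 m ++ [:: a2%:Z; - (b1.+1)%:Z]) = frob [:: a2] [:: b2].
  apply: (@lamL_hook _ _ m); first lia.
  rewrite (@dseg_split b2.+2 (m - b2.+1) b1.+1 (b1 - b2.+1) (m - b1.+1)); try lia.
  by apply/permP => P; rewrite /R2 !count_cat /= !count_cat /=; lia.
have e2 : lamL (R2 b1 b2 m ++ [:: - (b2.+1)%:Z; a1%:Z]) = frob [:: a1] [:: b1].
  apply: (@lamL_hook _ _ m); first lia.
  rewrite (@dseg_split 1 b1 b2.+1 b2 (b1 - b2.+1)); try lia.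
  by apply/permP => P; rewrite /R2 !count_cat /= !count_cat /=; lia.
have e3 : lamL (R2 b1 b2 m ++ [:: a2%:Z; - (b2.+1)%:Z]) = frob [:: a2] [:: b1].
  apply: (@lamL_hook _ _ m); first lia.
  rewrite (@dseg_split 1 b1 b2.+1 b2 (b1 - b2.+1)); try lia.
  by apply/permP => P; rewrite /R2 !count_cat /= !count_cat /=; lia.
have e4 : lamL (R2 b1 b2 m ++ [:: - (b1.+1)%:Z; a1%:Z]) = frob [:: a1] [:: b2].
  apply: (@lamL_hook _ _ m); first lia.
  rewrite (@dseg_split b2.+2 (m - b2.+1) b1.+1 (b1 - b2.+1) (m - b1.+1)); try lia.
  by apply/permP => P; rewrite /R2 !count_cat /= !count_cat /=; lia.
have e5 : lamL (R2 b1 b2 m ++ [:: a2%:Z; a1%:Z]) = frob [:: a1; a2] [:: b1; b2].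
  apply: (@lamL_r2 _ _ _ _ m); try lia.
  by apply/permP => P; rewrite /R2 !count_cat /= !count_cat /=; lia.
have e6 : lamL (R2 b1 b2 m ++ [:: - (b1.+1)%:Z; - (b2.+1)%:Z]) = frob [::] [::].
  apply: (@lamL_vac m).
  rewrite (@dseg_split 1 m b2.+1 b2 (m - b2.+1)); try lia.
  rewrite (@dseg_split b2.+2 (m - b2.+1) b1.+1 (b1 - b2.+1) (m - b1.+1)); try lia.
  by apply/permP => P; rewrite /R2 !count_cat /= !count_cat /=; lia.
pose cnt (y : int) (R : seq int) := count (fun x => (y < x)%R) R.
have key : plucker (R2 b1 b2 m ++ [:: a2%:Z])
                   (R2 b1 b2 m ++ [:: - (b1.+1)%:Z; - (b2.+1)%:Z; a1%:Z]) =
   (-1) ^+ (size (R2 b1 b2 m) + ninv (R2 b1 b2 m) + ninv (R2 b1 b2 m)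
            + cnt a2%:Z (R2 b1 b2 m) + cnt (- (b1.+1)%:Z) (R2 b1 b2 m)
            + cnt (- (b2.+1)%:Z) (R2 b1 b2 m) + cnt a1%:Z (R2 b1 b2 m)) *
   - (piF [::] [::] * piF [:: a1; a2] [:: b1; b2]
                - piF [:: a1] [:: b1] * piF [:: a2] [:: b2]
                + piF [:: a1] [:: b2] * piF [:: a2] [:: b1]).
  rewrite plucker_cat !big_ord_recl big_ord0 /= /bump /=.
  rewrite !tpiE; try by uniqt uR.
  rewrite e1 e2 e3 e4 e5 e6 /piF /cnt.
  move: (R2 b1 b2 m) => R.
  rewrite !ninv_cat !ninv_cons ninv_nil !big_cons !big_nil /=.
  have c1 : (a1%:Z < a2%:Z)%R = false by lia.
  have c2 : (- (b2.+1)%:Z < - (b1.+1)%:Z)%R = false by lia.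
  rewrite c1 c2 /nat_of_bool ?addn0 ?add0n !exprS. rewrite !exprD.
  move: (Defs.pi (frob [::] [::])) (Defs.pi (frob [:: a1; a2] [:: b1; b2])) (Defs.pi (frob [:: a1] [:: b1])) (Defs.pi (frob [:: a2] [:: b2])) (Defs.pi (frob [:: a1] [:: b2])) (Defs.pi (frob [:: a2] [:: b1])) => q0 q1 q2 q3 q4 q5.
  move: ((-1 : S) ^+ size R) ((-1 : S) ^+ ninv R) ((-1 : S) ^+ count (fun x => (a2%:Z < x)%R) R) ((-1 : S) ^+ count (fun x => (a1%:Z < x)%R) R) ((-1 : S) ^+ count (fun x => (- (b1.+1)%:Z < x)%R) R) ((-1 : S) ^+ count (fun x => (- (b2.+1)%:Z < x)%R) R) => s1 s2 s3 s4 s5 s6.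
  ring.
apply: (@ideal_sign _ _ _ _ key).
apply: ideal_gen; exists m, (m + a1 + 1)%N, (R2 b1 b2 m ++ [:: a2%:Z]),
  (R2 b1 b2 m ++ [:: - (b1.+1)%:Z; - (b2.+1)%:Z; a1%:Z]); split => //.
- by apply/andP; split; lia.
- by rewrite /R2 !size_cat !size_dseg /=; lia.
- by rewrite /R2 !size_cat !size_dseg /=; lia.
apply/andP; split; apply/allP => x; rewrite /R2 !mem_cat !mem_dseg !inE; lia.
Qed.


Lemma ideal_sign' (gen : S -> Prop) p G n :
  p = (-1) ^+ n * G -> in_ideal gen p -> in_ideal gen G.
Proof.
move=> e hp; have -> : G = (-1) ^+ n * p.
  by rewrite e mulrA -exprD -signr_odd oddD addbb expr0 mul1r.
exact: ideal_mul.
Qed.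

Definition R3 b1 b2 b3 m := dseg 1 b3 ++ dseg b3.+2 (b2 - b3.+1)
  ++ dseg b2.+2 (b1 - b2.+1) ++ dseg b1.+2 (m - b1.+1).

Ltac permt := by apply/permP => P; rewrite /R3; do 5 rewrite ?count_cat /=; lia.

Lemma G3m a1 a2 a3 b1 b2 b3 m : (a3 < a2)%N -> (a2 < a1)%N ->
  (b3 < b2)%N -> (b2 < b1)%N -> (b1 < m)%N ->
  PluckerIdeal (piF [::] [::] * piF [:: a1; a2; a3] [:: b1; b2; b3]
                - piF [:: a1] [:: b1] * piF [:: a2; a3] [:: b2; b3]
                + piF [:: a1] [:: b2] * piF [:: a2; a3] [:: b1; b3]
                - piF [:: a1] [:: b3] * piF [:: a2; a3] [:: b1; b2]).
Proof.
move=> ha3 ha2 hb3 hb2 hm.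
have uR : uniq (R3 b1 b2 b3 m).
  rewrite /R3 !cat_uniq !uniq_dseg /=; apply/and4P; split => //.
  - by apply/hasPn => x; rewrite !mem_cat !mem_dseg; lia.
  - by apply/hasPn => x; rewrite !mem_cat !mem_dseg; lia.
  - by apply/hasPn => x; rewrite !mem_dseg; lia.
pose B1 := - (b1.+1)%:Z. pose B2 := - (b2.+1)%:Z. pose B3 := - (b3.+1)%:Z.
have e1 : lamL (R3 b1 b2 b3 m ++ [:: a3%:Z; a2%:Z; - (b1.+1)%:Z]) = frob [:: a2; a3] [:: b2; b3].
  apply: (@lamL_r2 _ _ _ _ m); try lia.
  rewrite (@dseg_split b2.+2 (m - b2.+1) b1.+1 (b1 - b2.+1) (m - b1.+1)); try lia.
  permt.
have e2 : lamL (R3 b1 b2 b3 m ++ [:: - (b2.+1)%:Z; - (b3.+1)%:Z; a1%:Z]) = frob [:: a1] [:: b1].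
  apply: (@lamL_hook _ _ m); first lia.
  rewrite (@dseg_split 1 b1 b3.+1 b3 (b1 - b3.+1)); try lia.
  rewrite (@dseg_split b3.+2 (b1 - b3.+1) b2.+1 (b2 - b3.+1) (b1 - b2.+1)); try lia.
  permt.
have e3 : lamL (R3 b1 b2 b3 m ++ [:: a3%:Z; a2%:Z; - (b2.+1)%:Z]) = frob [:: a2; a3] [:: b1; b3].
  apply: (@lamL_r2 _ _ _ _ m); try lia.
  rewrite (@dseg_split b3.+2 (b1 - b3.+1) b2.+1 (b2 - b3.+1) (b1 - b2.+1)); try lia.
  permt.
have e4 : lamL (R3 b1 b2 b3 m ++ [:: - (b1.+1)%:Z; - (b3.+1)%:Z; a1%:Z]) = frob [:: a1] [:: b2].
  apply: (@lamL_hook _ _ m); first lia.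
  rewrite (@dseg_split 1 b2 b3.+1 b3 (b2 - b3.+1)); try lia.
  rewrite (@dseg_split b2.+2 (m - b2.+1) b1.+1 (b1 - b2.+1) (m - b1.+1)); try lia.
  permt.
have e5 : lamL (R3 b1 b2 b3 m ++ [:: a3%:Z; a2%:Z; - (b3.+1)%:Z]) = frob [:: a2; a3] [:: b1; b2].
  apply: (@lamL_r2 _ _ _ _ m); try lia.
  rewrite (@dseg_split 1 b2 b3.+1 b3 (b2 - b3.+1)); try lia.
  permt.
have e6 : lamL (R3 b1 b2 b3 m ++ [:: - (b1.+1)%:Z; - (b2.+1)%:Z; a1%:Z]) = frob [:: a1] [:: b3].
  apply: (@lamL_hook _ _ m); first lia.
  rewrite (@dseg_split b3.+2 (m - b3.+1) b2.+1 (b2 - b3.+1) (m - b2.+1)); try lia.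
  rewrite (@dseg_split b2.+2 (m - b2.+1) b1.+1 (b1 - b2.+1) (m - b1.+1)); try lia.
  permt.
have e7 : lamL (R3 b1 b2 b3 m ++ [:: a3%:Z; a2%:Z; a1%:Z]) = frob [:: a1; a2; a3] [:: b1; b2; b3].
  apply: (@lamL_r3 _ _ _ _ _ _ m); try lia.
  permt.
have e8 : lamL (R3 b1 b2 b3 m ++ [:: - (b1.+1)%:Z; - (b2.+1)%:Z; - (b3.+1)%:Z]) = frob [::] [::].
  apply: (@lamL_vac m).
  rewrite (@dseg_split 1 m b3.+1 b3 (m - b3.+1)); try lia.
  rewrite (@dseg_split b3.+2 (m - b3.+1) b2.+1 (b2 - b3.+1) (m - b2.+1)); try lia.
  rewrite (@dseg_split b2.+2 (m - b2.+1) b1.+1 (b1 - b2.+1) (m - b1.+1)); try lia.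
  permt.
have key : plucker (R3 b1 b2 b3 m ++ [:: a3%:Z; a2%:Z])
     (R3 b1 b2 b3 m ++ [:: - (b1.+1)%:Z; - (b2.+1)%:Z; - (b3.+1)%:Z; a1%:Z]) =
   (-1) ^+ (size (R3 b1 b2 b3 m) + ninv (R3 b1 b2 b3 m) + ninv (R3 b1 b2 b3 m)
       + count (fun x => (a3%:Z < x)%R) (R3 b1 b2 b3 m)
       + count (fun x => (a2%:Z < x)%R) (R3 b1 b2 b3 m)
       + count (fun x => (a1%:Z < x)%R) (R3 b1 b2 b3 m)
       + count (fun x => (- (b1.+1)%:Z < x)%R) (R3 b1 b2 b3 m)
       + count (fun x => (- (b2.+1)%:Z < x)%R) (R3 b1 b2 b3 m)
       + count (fun x => (- (b3.+1)%:Z < x)%R) (R3 b1 b2 b3 m)) *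
   (piF [::] [::] * piF [:: a1; a2; a3] [:: b1; b2; b3]
                - piF [:: a1] [:: b1] * piF [:: a2; a3] [:: b2; b3]
                + piF [:: a1] [:: b2] * piF [:: a2; a3] [:: b1; b3]
                - piF [:: a1] [:: b3] * piF [:: a2; a3] [:: b1; b2]).
  rewrite plucker_cat !big_ord_recl big_ord0 /= /bump /=.
  rewrite !tpiE; try by uniqt uR.
  rewrite e1 e2 e3 e4 e5 e6 e7 e8 /piF.
  move: (R3 b1 b2 b3 m) => R.
  rewrite !ninv_cat !ninv_cons ?ninv_nil !big_cons !big_nil /=.
  evalcmp.
  rewrite /nat_of_bool ?addn0 ?add0n !exprS !exprD.
  move: (Defs.pi (frob [::] [::])) (Defs.pi (frob [:: a1; a2; a3] [:: b1; b2; b3]))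
    (Defs.pi (frob [:: a1] [:: b1])) (Defs.pi (frob [:: a1] [:: b2])) (Defs.pi (frob [:: a1] [:: b3]))
    (Defs.pi (frob [:: a2; a3] [:: b2; b3])) (Defs.pi (frob [:: a2; a3] [:: b1; b3]))
    (Defs.pi (frob [:: a2; a3] [:: b1; b2])) => q0 q1 q2 q3 q4 q5 q6 q7.
  move: ((-1 : S) ^+ size R) ((-1 : S) ^+ ninv R)
    ((-1 : S) ^+ count (fun x => (a3%:Z < x)%R) R)
    ((-1 : S) ^+ count (fun x => (a2%:Z < x)%R) R)
    ((-1 : S) ^+ count (fun x => (a1%:Z < x)%R) R)
    ((-1 : S) ^+ count (fun x => (- (b1.+1)%:Z < x)%R) R)
    ((-1 : S) ^+ count (fun x => (- (b2.+1)%:Z < x)%R) R)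
    ((-1 : S) ^+ count (fun x => (- (b3.+1)%:Z < x)%R) R) => s1 s2 s3 s4 s5 s6 s7 s8.
  ring.
apply: (@ideal_sign' _ _ _ _ key).
apply: ideal_gen; exists m, (m + a1 + 1)%N, (R3 b1 b2 b3 m ++ [:: a3%:Z; a2%:Z]),
  (R3 b1 b2 b3 m ++ [:: - (b1.+1)%:Z; - (b2.+1)%:Z; - (b3.+1)%:Z; a1%:Z]); split => //.
- by apply/andP; split; lia.
- by rewrite /R3 !size_cat !size_dseg /=; lia.
- by rewrite /R3 !size_cat !size_dseg /=; lia.
apply/andP; split; apply/allP => x; rewrite /R3 !mem_cat !mem_dseg !inE; lia.
Qed.

Arguments ideal_mul {gen} c {f}.
Arguments ideal_add {gen f g}.
Arguments ideal_eq {gen f g}.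

Theorem mainTheorem9 (i j k : nat) : (i < j < k)%N ->
  let p0 := piF [::] [::] in
  let h a b := piF [:: a] [:: b] in
  let r2 a1 a2 b1 b2 := piF [:: a1; a2] [:: b1; b2] in
  let X := h i j * h j k * h k i in
  let XT := h j i * h k j * h i k in
  let D := h i i * h j j * h k k in
  PluckerIdeal
        (p0 * (h i i * r2 k j k j + h j k * r2 k i j i) - D + X)
  /\ PluckerIdeal
        (p0 * (h j j * r2 k i k i - h k i * r2 j i k j) - D + X)
  /\ PluckerIdeal
        (p0 * (h k k * r2 j i j i + h i j * r2 k j k i) - D + X)
  /\ PluckerIdeal
        (p0 * (h i i * r2 k j k j + h k j * r2 j i k i) - D + XT)
  /\ PluckerIdeal
        (p0 * (h j j * r2 k i k i - h i k * r2 k j j i) - D + XT)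
  /\ PluckerIdeal
        (p0 * (h k k * r2 j i j i + h j i * r2 k i k j) - D + XT)
  /\ PluckerIdeal
        (p0 ^+ 2 * piF [:: k; j; i] [:: k; j; i] * X - X ^+ 2
         + X * (2%:R * D - p0 * (h i i * r2 k j k j + h j j * r2 k i k i
                                 + h k k * r2 j i j i))
         - (h i i * h j j - p0 * r2 j i j i)
           * (h i i * h k k - p0 * r2 k i k i)
           * (h j j * h k k - p0 * r2 k j k j)).
Proof.
move=> /andP[hij hjk] p0 h r2 X XT D.
have G a1 a2 b1 b2 : (a2 < a1)%N -> (b2 < b1)%N ->
    PluckerIdeal (p0 * r2 a1 a2 b1 b2 - h a1 b1 * h a2 b2 + h a1 b2 * h a2 b1).
  by move=> ha hb; apply: (@G2m a1 a2 b1 b2 b1.+1).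
have hik : (i < k)%N by lia.
have Gkjkj := G k j k j hjk hjk.
have Gkiji := G k i j i hik hij.
have Gkiki := G k i k i hik hik.
have Gjikj := G j i k j hij hjk.
have Gjiji := G j i j i hij hij.
have Gkjki := G k j k i hjk hik.
have Gjiki := G j i k i hij hik.
have Gkjji := G k j j i hjk hij.
have Gkikj := G k i k j hik hjk.
have R3 : PluckerIdeal (p0 * piF [:: k; j; i] [:: k; j; i] - h k k * r2 j i j i
                        + h k j * r2 j i k i - h k i * r2 j i k j).
  exact: (@G3m k j i k j i k.+1).
rewrite /X /XT /D.
move: (piF [:: k; j; i] [:: k; j; i]) R3 => r3 R3.
clear G.
clearbody p0 h r2.
split.
  have := ideal_add (ideal_mul (h i i) Gkjkj) (ideal_mul (h j k) Gkiji).
  by apply: ideal_eq; ring.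
split.
  have := ideal_add (ideal_mul (h j j) Gkiki) (ideal_mul (- h k i) Gjikj).
  by apply: ideal_eq; ring.
split.
  have := ideal_add (ideal_mul (h k k) Gjiji) (ideal_mul (h i j) Gkjki).
  by apply: ideal_eq; ring.
split.
  have := ideal_add (ideal_mul (h i i) Gkjkj) (ideal_mul (h k j) Gjiki).
  by apply: ideal_eq; ring.
split.
  have := ideal_add (ideal_mul (h j j) Gkiki) (ideal_mul (- h i k) Gkjji).
  by apply: ideal_eq; ring.
split.
  have := ideal_add (ideal_mul (h k k) Gjiji) (ideal_mul (h j i) Gkikj).
  by apply: ideal_eq; ring.
have := ideal_add (ideal_mul (p0 * (h i j * h j k * h k i)) R3)
  (ideal_add (ideal_mul (- (h i j * h j k * h k i) * h k j) Gjiki)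
  (ideal_add (ideal_mul ((h i j * h j k * h k i) * h k i) Gjikj)
  (ideal_add (ideal_mul (- (h i j * h j k * h k i) * h i i) Gkjkj)
  (ideal_add (ideal_mul (- (h i j * h j k * h k i) * h j j) Gkiki)
  (ideal_add (ideal_mul ((h k i * h i k - (p0 * r2 k i k i - h k k * h i i + h k i * h i k))
          * (h k j * h j k - (p0 * r2 k j k j - h k k * h j j + h k j * h j k))) Gjiji)
  (ideal_add (ideal_mul (h j i * h i j * (h k j * h j k - (p0 * r2 k j k j - h k k * h j j + h k j * h j k))) Gkiki)
             (ideal_mul (h j i * h i j * (h k i * h i k)) Gkjkj))))))).
apply: ideal_eq. ring.
Qed.
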